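(* Let $t\ge 3$ and let $G_t$ be the labeling of the complete graph $K_{2t}$ in which the edges of a fixed perfect matching are labeled $-$ and all other edges are labeled $+$. Consider the linear program $\mathsf{L}$ in variables $M\in\mathbb{R}$ and $x_{uv}$ for each unordered pair $uv$ of distinct vertices: minimize $M$ subject to $x_{uv}\le x_{uz}+x_{zv}$ for all distinct $u,v,z$; $\sum_{w\in N^+(v)}x_{vw}+\sum_{w\in N^-(v)}(1-x_{vw})\le M$ for all vertices $v$; and $0\le x_{e}\le 1$ for all edges $e$. Then the unique optimal solution of $\mathsf{L}$ has $x_{uv}=0$ for all edges $uv$ of $G_t$.
   Context: $N^+(v)$ and $N^-(v)$ denote the sets of vertices joined to $v$ by a $+$ edge, resp. a $-$ edge. *)

(* Defs.v *)
From mathcomp Require Import all_boot all_order all_algebra.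
From mathcomp Require Import reals.
Set Implicit Arguments. Unset Strict Implicit. Unset Printing Implicit Defensive.
Import Order.TTheory GRing.Theory Num.Theory.
Local Open Scope ring_scope.

(* Vertices of K_{2t} are 'I_(2*t).  A perfect matching is given by a
   fixed-point-free involution p : v is matched to p v.  The edge uv is
   labelled - iff v = p u, and + otherwise. *)
Definition perfect_matching (n : nat) (p : 'I_n -> 'I_n) : Prop :=
  (forall v, p (p v) = v) /\ (forall v, p v != v).

Definition Nplus (n : nat) (p : 'I_n -> 'I_n) (v : 'I_n) : {set 'I_n} :=
  [set w | (w != v) && (w != p v)].
Definition Nminus (n : nat) (p : 'I_n -> 'I_n) (v : 'I_n) : {set 'I_n} :=
  [set p v].

(* Edge variables x_{uv} are indexed by unordered pairs: we represent them by
   a function x : V -> V -> R which is symmetric on distinct pairs; the values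
   x v v are meaningless and never used. *)
Definition feasibleL (R : realType) (n : nat) (p : 'I_n -> 'I_n)
    (M : R) (x : 'I_n -> 'I_n -> R) : Prop :=
  (forall u v, u != v -> x u v = x v u) /\
  (forall u v z, u != v -> v != z -> u != z -> x u v <= x u z + x z v) /\
  (forall v, \sum_(w in Nplus p v) x v w + \sum_(w in Nminus p v) (1 - x v w)
               <= M) /\
  (forall u v, u != v -> 0 <= x u v /\ x u v <= 1).

Definition optimalL (R : realType) (n : nat) (p : 'I_n -> 'I_n)
    (M : R) (x : 'I_n -> 'I_n -> R) : Prop :=
  feasibleL p M x /\ forall M' x', feasibleL p M' x' -> M <= M'.

(* Main.v *)
Require Import Defs.
From mathcomp Require Import all_boot all_order all_algebra.
From mathcomp Require Import reals.
From mathcomp Require Import lra zify.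
Import Order.TTheory GRing.Theory Num.Theory.
Local Open Scope ring_scope.

Section S.
Variables (R : realType) (n : nat) (p : 'I_n -> 'I_n).
Hypothesis pp : forall v, p (p v) = v.
Hypothesis pn : forall v, p v != v.
Hypothesis n4 : (6 <= n)%N.

Lemma card_Nplus v : (3 <= #|Nplus p v|)%N.
Proof.
have -> : Nplus p v = ~: [set v; p v].
  by apply/setP => w; rewrite !inE negb_or.
have := cardsC [set v; p v]; rewrite cards2 card_ord.
rewrite eq_sym pn /= => h; have n5 := n4; rewrite -h in n5; rewrite -(leq_add2l 2); exact: leq_trans n5.
Qed.

Lemma Nplus_p v : Nplus p (p v) = Nplus p v.
Proof. by apply/setP => w; rewrite !inE pp andbC. Qed.

Definition A (x : 'I_n -> 'I_n -> R) v := \sum_(w in Nplus p v) x v w.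

Lemma key (M : R) x : feasibleL p M x ->
  1 <= M /\ (M <= 1 -> forall u v, u != v -> x u v = 0).
Proof.
move=> [sym [tri [vert bnd]]].
have pnv v : v != p v by rewrite eq_sym pn.
have B0 v : 0 <= x v (p v) by case: (bnd v (p v) (pnv v)).
have A0 v : 0 <= A x v.
  apply: sumr_ge0 => w; rewrite inE => /andP [h1 _].
  by case: (bnd v w); rewrite // eq_sym.
have L1 v : 3%:R * x v (p v) <= A x v + A x (p v).
  have h1 : 3%:R * x v (p v) <= \sum_(z in Nplus p v) x v (p v).
    rewrite sumr_const -[_ *+ #|_|]mulr_natl; apply: (ler_wpM2r (B0 v)).
    by rewrite ler_nat card_Nplus.
  apply: (le_trans h1).
  rewrite /A Nplus_p -big_split /=.
  apply: ler_sum => z; rewrite inE => /andP [hzv hzp].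
  rewrite [x (p v) z]sym; last by rewrite eq_sym.
  apply: tri => //; by rewrite eq_sym.
have Vx v : A x v + (1 - x v (p v)) <= M.
  by have := vert v; rewrite big_set1.
have S1 : 3%:R * (\sum_v x v (p v)) <= 2%:R * \sum_v A x v.
  have -> : 2%:R * \sum_v A x v = \sum_v (A x v + A x (p v)).
    have e : \sum_v A x (p v) = \sum_v A x v.
      by rewrite [RHS](reindex_inj (can_inj pp)).
    rewrite big_split /= e.
    by rewrite mulr2n mulrDl mul1r.
  by rewrite mulr_sumr; apply: ler_sum => v _.
have S2 : \sum_v A x v + (n%:R - \sum_v x v (p v)) <= n%:R * M.
  have -> : n%:R * M = \sum_(v : 'I_n) M by rewrite sumr_const card_ord mulr_natl.
  have -> : (n%:R : R) = \sum_(v : 'I_n) 1 by rewrite sumr_const card_ord.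
  rewrite -sumrB -big_split /=; exact: ler_sum.
have SB : 0 <= \sum_v x v (p v) by apply: sumr_ge0.
have SA : 0 <= \sum_v A x v by apply: sumr_ge0.
have npos : (0 : R) < n%:R by rewrite ltr0n; lia.
have H1 : 1 <= M.
  have : n%:R * 1 <= n%:R * M by lra.
  by rewrite ler_pM2l.
split => // HM.
have HM1 : M = 1 by apply: le_anti; rewrite HM H1.
subst M.
have eB : \sum_v x v (p v) = 0 by lra.
have eA : \sum_v A x v = 0 by lra.
move=> u v uv.
case: (eqVneq v (p u)) => [->|vp].
  by apply: (psumr_eq0P (fun i _ => B0 i) eB).
have Au : A x u = 0 by apply: (psumr_eq0P (fun i _ => A0 i) eA).
apply: (psumr_eq0P _ Au).
  by move=> w; rewrite inE => /andP [h _]; case: (bnd u w); rewrite // eq_sym.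
by rewrite inE eq_sym uv vp.
Qed.
End S.

Theorem proposition1 (R : realType) (t : nat) (p : 'I_(2 * t) -> 'I_(2 * t)) :
  (3 <= t)%N -> perfect_matching p ->
  exists (M : R) (x : 'I_(2 * t) -> 'I_(2 * t) -> R),
    optimalL p M x /\
    (forall u v, u != v -> x u v = 0) /\
    (forall (M' : R) x', optimalL p M' x' ->
       M' = M /\ forall u v, u != v -> x' u v = x u v).
Proof.
move=> t3 [pp pn].
have n4 : (6 <= 2 * t)%N by lia.
have F0 : feasibleL p (1 : R) (fun _ _ => 0).
  split; first by [].
  split; first by move=> *; rewrite addr0.
  split; last by move=> *; rewrite lexx ler01.
  by move=> v; rewrite big_set1 big1 // subr0 add0r.
exists 1, (fun _ _ => 0); split.
  split => // M' x' F'; exact: (@key _ _ _ pp pn n4 _ _ F').1.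
split => // M' x' [F' opt].
have := @key _ _ _ pp pn n4 _ _ F'; move=> [H1 H2].
have HM : M' <= 1 := opt _ _ F0.
split; first by apply: le_anti; rewrite HM H1.
exact: H2.
Qed.
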